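(* Let $v=(v_{ij})$ be a complex $2\times2$ matrix with $\|v\|=1$ (i.e. $v\in\partial\mathcal R_I$). If $\pi(v)\in\partial\mathbb E$, then $|v_{12}|=|v_{21}|$.
   Context: $\|\cdot\|$ is the operator norm on $2\times2$ complex matrices, $\mathcal R_I=\{x:\|x\|<1\}$, $\pi(x)=(x_{11},x_{22},\det x)$, and the tetrablock is $\mathbb E=\pi(\mathcal R_I)=\{z\in\mathbb C^3:\ |z_2-\bar z_1z_3|+|z_1z_2-z_3|+|z_1|^2<1\}$. *)

(* Defs.v *)
From HB Require Import structures.
From mathcomp Require Import all_boot all_order all_algebra.
From mathcomp Require Import complex.
From mathcomp Require Import classical_sets reals.
Set Implicit Arguments. Unset Strict Implicit. Unset Printing Implicit Defensive.
Import Order.TTheory GRing.Theory Num.Theory.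
Local Open Scope ring_scope.
Local Open Scope classical_set_scope.

Section Tetrablock.
Variable R : realType.
Local Notation C := (R[i]).

Definition cabs (z : C) : R := Num.sqrt (complex.Re z ^+ 2 + complex.Im z ^+ 2).

Definition vnorm (u : 'cV[C]_2) : R :=
  Num.sqrt (cabs (u 0 0) ^+ 2 + cabs (u 1 0) ^+ 2).

Definition opnorm (x : 'M[C]_2) : R :=
  sup [set vnorm (x *m u) | u in [set u : 'cV[C]_2 | vnorm u = 1]].

Definition piT (x : 'M[C]_2) : C * C * C := (x 0 0, x 1 1, \det x).

Definition tetrablock : set (C * C * C) :=
  [set piT x | x in [set x : 'M[C]_2 | opnorm x < 1]].

(* max-distance on C^3 (induces the standard topology of C^3) *)
Definition dist3 (z w : C * C * C) : R :=
  Num.max (cabs (z.1.1 - w.1.1)) (Num.max (cabs (z.1.2 - w.1.2)) (cabs (z.2 - w.2))).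

Definition closure3 (S : set (C * C * C)) : set (C * C * C) :=
  [set z | forall e : R, 0 < e -> exists w, S w /\ dist3 z w < e].

Definition interior3 (S : set (C * C * C)) : set (C * C * C) :=
  [set z | exists e : R, 0 < e /\ forall w, dist3 z w < e -> S w].

Definition boundary3 (S : set (C * C * C)) : set (C * C * C) :=
  [set z | closure3 S z /\ ~ interior3 S z].

End Tetrablock.

(* Main.v *)
Require Import Defs.
From HB Require Import structures.
From mathcomp Require Import all_boot all_order all_algebra.
From mathcomp Require Import complex.
From mathcomp Require Import classical_sets reals.
From mathcomp Require Import boolp ring lra.
Set Implicit Arguments. Unset Strict Implicit. Unset Printing Implicit Defensive.
Import Order.TTheory GRing.Theory Num.Theory.
Local Open Scope classical_set_scope.
Local Open Scope ring_scope.

Section S.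
Variable R : realType.
Local Notation C := (R[i]).
Local Notation Re := (@complex.Re R).
Local Notation Im := (@complex.Im R).

Lemma det22 (A : 'M[C]_2) : \det A = A 0 0 * A 1 1 - A 0 1 * A 1 0.
Proof.
rewrite (expand_det_row _ 0) !big_ord_recl big_ord0 addr0 /cofactor !det_mx11 /=.
rewrite !mxE /= !expr0 expr1 !mul1r mulN1r.
rewrite mulrN; congr (_ * A _ _ - _ * A _ _); try congr (A _ _); by apply/eqP.
Qed.

Lemma mulmx_e (x : 'M[C]_2) (u : 'cV[C]_2) i : (x *m u) i 0 = x i 0 * u 0 0 + x i 1 * u 1 0.
Proof.
have l1 : lift ord0 ord0 = 1 :> 'I_2 by apply/eqP.
by rewrite mxE !big_ord_recl big_ord0 addr0 l1.
Qed.

Lemma cReM (x y : C) : Re (x * y) = Re x * Re y - Im x * Im y. Proof. by case: x => ? ?; case: y => ? ?; reflexivity. Qed.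
Lemma cImM (x y : C) : Im (x * y) = Re x * Im y + Im x * Re y. Proof. by case: x => ? ?; case: y => ? ?; reflexivity. Qed.
Lemma cReD (x y : C) : Re (x + y) = Re x + Re y. Proof. by case: x => ? ?; case: y => ? ?; reflexivity. Qed.
Lemma cImD (x y : C) : Im (x + y) = Im x + Im y. Proof. by case: x => ? ?; case: y => ? ?; reflexivity. Qed.
Lemma cReN (x : C) : Re (- x) = - Re x. Proof. by case: x => ? ?; reflexivity. Qed.
Lemma cImN (x : C) : Im (- x) = - Im x. Proof. by case: x => ? ?; reflexivity. Qed.
Lemma cReB (x y : C) : Re (x - y) = Re x - Re y. Proof. by rewrite cReD cReN. Qed.
Lemma cImB (x y : C) : Im (x - y) = Im x - Im y. Proof. by rewrite cImD cImN. Qed.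
Lemma cReJ (x : C) : Re (x^*)%C = Re x. Proof. by case: x => ? ?; reflexivity. Qed.
Lemma cImJ (x : C) : Im (x^*)%C = - Im x. Proof. by case: x => ? ?; reflexivity. Qed.
Lemma cReR (k : R) : Re (k%:C)%C = k. Proof. by []. Qed.
Lemma cImR (k : R) : Im (k%:C)%C = 0. Proof. by []. Qed.
Lemma cRe1 : Re (1 : C) = 1. Proof. by []. Qed.
Lemma cIm1 : Im (1 : C) = 0. Proof. by []. Qed.
Lemma cRe0 : Re (0 : C) = 0. Proof. by []. Qed.
Lemma cIm0 : Im (0 : C) = 0. Proof. by []. Qed.

Definition nz (z : C) : R := Re z ^+ 2 + Im z ^+ 2.
Local Ltac cexp0 := rewrite /nz ?(cReM, cImM, cReD, cImD, cReN, cImN, cReJ, cImJ, cReR, cImR, cRe1, cIm1, cRe0, cIm0).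


Lemma nz_ge0 z : 0 <= nz z.
Proof. by rewrite /nz addr_ge0 ?sqr_ge0. Qed.

Lemma cabs_sq z : cabs z ^+ 2 = nz z.
Proof. by rewrite /cabs sqr_sqrtr // nz_ge0. Qed.

Lemma cabs_ge0 (z : C) : 0 <= cabs z.
Proof. exact: sqrtr_ge0. Qed.

Lemma nzM x y : nz (x * y) = nz x * nz y.
Proof. cexp0; ring. Qed.

Lemma nz_eq0 z : nz z = 0 -> z = 0.
Proof.
case: z => x y; rewrite /nz /= => h.
have hx : x = 0 by apply/eqP; rewrite -sqrf_eq0 eq_le sqr_ge0 andbT; nra.
have hy : y = 0 by apply/eqP; rewrite -sqrf_eq0 eq_le sqr_ge0 andbT; nra.
by rewrite hx hy.
Qed.

Definition qf a b c d u1 u2 := nz u1 + nz u2 - (nz (a*u1 + b*u2) + nz (c*u1 + d*u2)).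
Definition Aq a c := 1 - nz a - nz c.
Definition Cq b d := 1 - nz b - nz d.
Definition Bq (a b c d : C) : C := -((a^*)%C * b + (c^*)%C * d).
Definition Dq a b c d := 1 - (nz a + nz b + nz c + nz d) + nz (a*d - b*c).

Lemma qf_expand a b c d u1 u2 : qf a b c d u1 u2 =
  Aq a c * nz u1 + Cq b d * nz u2 + 2 * Re (Bq a b c d * (u1^*)%C * u2).
Proof. rewrite /qf /Aq /Cq /Bq; cexp0; ring. Qed.

Lemma qf_id1 a b c d u1 u2 : Aq a c * qf a b c d u1 u2 =
  nz ((Aq a c)%:C%C * u1 + Bq a b c d * u2) + Dq a b c d * nz u2.
Proof. rewrite /qf /Aq /Cq /Bq /Dq; cexp0; ring. Qed.

Lemma qf_id2 a b c d u1 u2 : Cq b d * qf a b c d u1 u2 =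
  nz ((Cq b d)%:C%C * u2 + (Bq a b c d)^*%C * u1) + Dq a b c d * nz u1.
Proof. rewrite /qf /Aq /Cq /Bq /Dq; cexp0; ring. Qed.

Lemma Dq_id a b c d : Aq a c * Cq b d - nz (Bq a b c d) = Dq a b c d.
Proof. rewrite /Aq /Cq /Bq /Dq; cexp0; ring. Qed.
End S.

Ltac cexp := rewrite /nz ?(cReM, cImM, cReD, cImD, cReN, cImN, cReJ, cImJ, cReR, cImR, cRe1, cIm1, cRe0, cIm0).

Section S2.
Variable R : realType.
Local Notation C := (R[i]).
Local Notation Re := (@complex.Re R).
Local Notation Im := (@complex.Im R).

Lemma vnormE (u : 'cV[C]_2) : vnorm u = Num.sqrt (nz (u 0 0) + nz (u 1 0)).
Proof. by rewrite /vnorm !cabs_sq. Qed.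

Definition mkv (u1 u2 : C) : 'cV[C]_2 := \col_(i < 2) (if i == 0 then u1 else u2).
Lemma mkv0 u1 u2 : mkv u1 u2 0 0 = u1. Proof. by rewrite mxE. Qed.
Lemma mkv1 u1 u2 : mkv u1 u2 1 0 = u2. Proof. by rewrite mxE. Qed.

Lemma nzRM (z : C) k : nz (z * k%:C%C) = nz z * k ^+ 2.
Proof. cexp; ring. Qed.

Lemma contraction (v : 'M[C]_2) : opnorm v = 1 ->
  forall u1 u2, 0 <= qf (v 0 0) (v 0 1) (v 1 0) (v 1 1) u1 u2.
Proof.
move=> hv u1 u2.
set E := [set vnorm (v *m u) | u in [set u : 'cV[C]_2 | vnorm u = 1]].
have hs : has_sup E.
  apply: contrapT => /sup_out h.
  by move: hv; rewrite /opnorm -/E h => /eqP; rewrite eq_sym oner_eq0.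
have ub : forall u, vnorm u = 1 -> vnorm (v *m u) <= 1.
  move=> u hu; rewrite -hv; apply: (sup_upper_bound hs); by exists u.
have h1 := nz_ge0 u1; have h2 := nz_ge0 u2.
have [n0|npos] := eqVneq (nz u1 + nz u2) 0.
  have e1 : nz u1 = 0 by lra.
  have e2 : nz u2 = 0 by lra.
  rewrite (nz_eq0 e1) (nz_eq0 e2) /qf !mulr0 !addr0.
  rewrite /nz /= expr2 mul0r; lra.
have np : 0 < nz u1 + nz u2 by rewrite lt0r npos addr_ge0.
set r := Num.sqrt (nz u1 + nz u2).
have rp : 0 < r by rewrite sqrtr_gt0.
have r2 : r ^+ 2 = nz u1 + nz u2 by rewrite sqr_sqrtr // ltW.
set k := r^-1.
have hk : k ^+ 2 * (nz u1 + nz u2) = 1.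
  by rewrite /k -r2 exprVn mulVf // expf_neq0 // gt_eqF.
have kp : 0 < k ^+ 2 by rewrite exprn_gt0 // invr_gt0.
have := ub (mkv (u1 * k%:C%C) (u2 * k%:C%C)).
rewrite !vnormE !mulmx_e !mkv0 !mkv1 !nzRM -mulrDl mulrC hk sqrtr1 => /(_ erefl).
have -> : v 0 0 * (u1 * k%:C%C) + v 0 1 * (u2 * k%:C%C) = (v 0 0 * u1 + v 0 1 * u2) * k%:C%C by ring.
have -> : v 1 0 * (u1 * k%:C%C) + v 1 1 * (u2 * k%:C%C) = (v 1 0 * u1 + v 1 1 * u2) * k%:C%C by ring.
rewrite !nzRM -mulrDl.
set N := _ + _ => hN.
have N0 : 0 <= N * k ^+ 2.
  apply: mulr_ge0; last exact: ltW.
  by rewrite /N addr_ge0 ?nz_ge0.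
have hN2 : N * k ^+ 2 <= 1.
  have := sqrtr_ge0 (N * k ^+ 2); have := sqr_sqrtr N0; nra.
rewrite /qf -/N subr_ge0; nra.
Qed.

Lemma nz1 : nz (1 : C) = 1. Proof. cexp; ring. Qed.
Lemma nz0 : nz (0 : C) = 0. Proof. cexp; ring. Qed.

Lemma psd_cons (a b c d : C) : (forall u1 u2, 0 <= qf a b c d u1 u2) ->
  0 <= Aq a c + Cq b d /\ 0 <= Dq a b c d.
Proof.
move=> H.
have hA : 0 <= Aq a c.
  have e : qf a b c d 1 0 = Aq a c by rewrite qf_expand; cexp; ring.
  by rewrite -e.
have hC : 0 <= Cq b d.
  have e : qf a b c d 0 1 = Cq b d by rewrite qf_expand; cexp; ring.
  by rewrite -e.
split; first exact: addr_ge0.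
have [Ap|A0] := ltrP 0 (Aq a c).
  have e := qf_id1 a b c d (- (Bq a b c d * (Aq a c)^-1%:C%C)) 1.
  have e2 : (Aq a c)%:C%C * - (Bq a b c d * (Aq a c)^-1%:C%C) + Bq a b c d * 1 = 0.
    by rewrite mulrN mulrCA -rmorphM mulfV ?gt_eqF // mulr1 addNr.
  rewrite e2 nz0 nz1 add0r mulr1 in e.
  by rewrite -e mulr_ge0.
have A0' : Aq a c = 0 by apply/eqP; rewrite eq_le A0 hA.
have [Cp|C0] := ltrP 0 (Cq b d).
  have e := qf_id2 a b c d 1 (- ((Bq a b c d)^*%C * (Cq b d)^-1%:C%C)).
  have e2 : (Cq b d)%:C%C * - ((Bq a b c d)^*%C * (Cq b d)^-1%:C%C) + (Bq a b c d)^*%C * 1 = 0.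
    by rewrite mulrN mulrCA -rmorphM mulfV ?gt_eqF // mulr1 addNr.
  rewrite e2 nz0 nz1 add0r mulr1 in e.
  by rewrite -e mulr_ge0.
have C0' : Cq b d = 0 by apply/eqP; rewrite eq_le C0 hC.
have e : qf a b c d 1 (- (Bq a b c d)^*%C) = - (2 * nz (Bq a b c d)).
  rewrite qf_expand; cexp; rewrite A0' C0'; ring.
have := H 1 (- (Bq a b c d)^*%C); rewrite e => h.
by rewrite -Dq_id A0' C0' mul0r; lra.
Qed.

Lemma strict_opnorm (x : 'M[C]_2) :
  0 < Aq (x 0 0) (x 1 0) + Cq (x 0 1) (x 1 1) ->
  0 < Dq (x 0 0) (x 0 1) (x 1 0) (x 1 1) -> opnorm x < 1.
Proof.
set a := x 0 0; set b := x 0 1; set c := x 1 0; set d := x 1 1.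
set T := Aq a c + Cq b d; set D := Dq a b c d => Tp Dp.
have bnd : forall u1 u2, nz (a * u1 + b * u2) + nz (c * u1 + d * u2)
    <= (1 - D / T) * (nz u1 + nz u2).
  move=> u1 u2.
  have e1 := qf_id1 a b c d u1 u2; have e2 := qf_id2 a b c d u1 u2.
  have hT : T * qf a b c d u1 u2 >= D * (nz u1 + nz u2).
    rewrite /T (mulrDl (Aq a c)) e1 e2 /D.
    have := nz_ge0 ((Aq a c)%:C%C * u1 + Bq a b c d * u2).
    have := nz_ge0 ((Cq b d)%:C%C * u2 + (Bq a b c d)^*%C * u1). lra.
  have hq : D / T * (nz u1 + nz u2) <= qf a b c d u1 u2.
    rewrite mulrAC ler_pdivrMr // [_ * T]mulrC; exact: hT.

  move: hq; rewrite /qf; lra.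
set m := Num.max (1 - D / T) 0.
have m0 : 0 <= m by rewrite /m le_max lexx orbT.
have m1 : 1 - D / T <= m by rewrite /m le_max lexx.
have mlt : m < 1.
  rewrite /m gt_max ltr01 andbT; rewrite ltrBlDr ltrDl divr_gt0 //.
have : opnorm x <= (1 + m) / 2.
  apply: ge_sup.
    exists (vnorm (x *m mkv 1 0)); exists (mkv 1 0) => //.
    by rewrite /= vnormE mkv0 mkv1 nz1 nz0 addr0 sqrtr1.
  move=> y [u /= hu <-].
  rewrite vnormE in hu.
  have hN : nz (u 0 0) + nz (u 1 0) = 1.
    have h0 : 0 <= nz (u 0 0) + nz (u 1 0) by rewrite addr_ge0 ?nz_ge0.
    by rewrite -(sqr_sqrtr h0) hu expr1n.
  rewrite vnormE !mulmx_e -/a -/b -/c -/d.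
  set M := _ + _.
  have hM : M <= m.
    have := bnd (u 0 0) (u 1 0); rewrite hN mulr1 -/M => h; lra.
  have M0 : 0 <= M by rewrite /M addr_ge0 ?nz_ge0.
  have := sqr_sqrtr M0; have := sqrtr_ge0 M; nra.
move=> h; apply: (le_lt_trans h); lra.
Qed.
End S2.

Section S5.
Variable R : realType.
Local Notation C := (R[i]).
Local Notation Re := (@complex.Re R).
Local Notation Im := (@complex.Im R).
Local Notation T3 := (C * C * C)%type.

Definition ctsat (f : T3 -> R) (z0 : T3) := forall e, 0 < e ->
  exists2 d, 0 < d & forall z, dist3 z0 z < d -> `|f z - f z0| < e.

Lemma ctsat_ext f g z0 : (forall z, f z = g z) -> ctsat f z0 -> ctsat g z0.
Proof.
move=> fg hf e ep; have [d dp hd] := hf e ep; exists d => // z hz.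
by rewrite -!fg; apply: hd.
Qed.

Lemma cts_const k z0 : ctsat (fun _ => k) z0.
Proof. by move=> e ep; exists 1 => // z _; rewrite subrr normr0. Qed.

Lemma cts_add f g z0 : ctsat f z0 -> ctsat g z0 -> ctsat (fun z => f z + g z) z0.
Proof.
move=> hf hg e ep.
have e2 : 0 < e / 2 by rewrite divr_gt0.
have [d1 d1p h1] := hf _ e2; have [d2 d2p h2] := hg _ e2.
exists (Num.min d1 d2); first by rewrite lt_min d1p d2p.
move=> z; rewrite lt_min => /andP [z1 z2].
have := h1 z z1; have := h2 z z2.
have -> : f z + g z - (f z0 + g z0) = (f z - f z0) + (g z - g z0) by ring.
have := ler_normD (f z - f z0) (g z - g z0); lra.
Qed.

Lemma cts_opp f z0 : ctsat f z0 -> ctsat (fun z => - f z) z0.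
Proof.
move=> hf e ep; have [d dp hd] := hf e ep; exists d => // z hz.
by rewrite -opprD normrN; apply: hd.
Qed.

Lemma cts_mul f g z0 : ctsat f z0 -> ctsat g z0 -> ctsat (fun z => f z * g z) z0.
Proof.
move=> hf hg e ep.
set K := 1 + `|f z0| + `|g z0|.
have Kp : 0 < K by have := normr_ge0 (f z0); have := normr_ge0 (g z0); rewrite /K; lra.
set eta := Num.min 1 (e / K).
have etap : 0 < eta by rewrite lt_min ltr01 divr_gt0.
have eta1 : eta <= 1 by rewrite ge_min lexx.
have etaK : eta * K <= e.
  have : eta <= e / K by rewrite ge_min lexx orbT.
  by rewrite ler_pdivlMr.
have [d1 d1p h1] := hf _ etap; have [d2 d2p h2] := hg _ etap.
exists (Num.min d1 d2); first by rewrite lt_min d1p d2p.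
move=> z; rewrite lt_min => /andP [z1 z2].
have hp := h1 z z1; have hr := h2 z z2.
set p := `|f z - f z0| in hp; set r := `|g z - g z0| in hr.
have p0 : 0 <= p by rewrite normr_ge0.
have r0 : 0 <= r by rewrite normr_ge0.
have F0 := normr_ge0 (f z0); have G0 := normr_ge0 (g z0).
have -> : f z * g z - f z0 * g z0 =
   (f z - f z0) * (g z - g z0) + (f z - f z0) * g z0 + f z0 * (g z - g z0) by ring.
have hb : `|(f z - f z0) * (g z - g z0) + (f z - f z0) * g z0 + f z0 * (g z - g z0)|
    <= p * r + p * `|g z0| + `|f z0| * r.
  apply: (le_trans (ler_normD _ _)); rewrite !normrM lerD2r.
  by apply: (le_trans (ler_normD _ _)); rewrite !normrM.
apply: (le_lt_trans hb).
move: etaK; rewrite /K => etaK.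
nra.
Qed.

Lemma cts_pos f z0 : ctsat f z0 -> 0 < f z0 ->
  exists2 d, 0 < d & forall z, dist3 z0 z < d -> 0 < f z.
Proof.
move=> hf fp; have [d dp hd] := hf _ fp; exists d => // z hz.
have := hd z hz; rewrite ltr_norml; lra.
Qed.

Lemma Re_le_cabs (w : C) : `|Re w| <= cabs w.
Proof.
rewrite /cabs -sqrtr_sqr ler_sqrt ?addr_ge0 ?sqr_ge0 //.
by rewrite lerDl sqr_ge0.
Qed.

Lemma Im_le_cabs (w : C) : `|Im w| <= cabs w.
Proof.
rewrite /cabs -sqrtr_sqr ler_sqrt ?addr_ge0 ?sqr_ge0 //.
by rewrite lerDr sqr_ge0.
Qed.

Lemma coord_lip (pr : T3 -> C) (Q : C -> R) z0 :
  (forall w : C, `|Q w| <= cabs w) -> (forall x y, Q (x - y) = Q x - Q y) ->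
  (forall z, cabs (pr z0 - pr z) <= dist3 z0 z) ->
  ctsat (fun z => Q (pr z)) z0.
Proof.
move=> hQ hlin hd e ep; exists e => // z hz.
rewrite -normrN opprB -hlin.
exact: (le_lt_trans (hQ _) (le_lt_trans (hd z) hz)).
Qed.

Lemma d1 (z0 z : T3) : cabs (z0.1.1 - z.1.1) <= dist3 z0 z.
Proof. by rewrite /dist3 le_max lexx. Qed.
Lemma d2 (z0 z : T3) : cabs (z0.1.2 - z.1.2) <= dist3 z0 z.
Proof. by rewrite /dist3 !le_max lexx orbT. Qed.
Lemma d3 (z0 z : T3) : cabs (z0.2 - z.2) <= dist3 z0 z.
Proof. by rewrite /dist3 !le_max lexx !orbT. Qed.
End S5.

Section S6.
Variable R : realType.
Local Notation C := (R[i]).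
Local Notation Re := (@complex.Re R).
Local Notation Im := (@complex.Im R).
Local Notation T3 := (C * C * C)%type.

Definition ccts (g : T3 -> C) z0 :=
  ctsat (fun z => Re (g z)) z0 /\ ctsat (fun z => Im (g z)) z0.

Lemma ccts_const (k : C) z0 : ccts (fun _ => k) z0.
Proof. by split; apply: cts_const. Qed.

Lemma ccts_add g h z0 : ccts g z0 -> ccts h z0 -> ccts (fun z => g z + h z) z0.
Proof.
move=> [g1 g2] [h1 h2]; split.
  by apply: (ctsat_ext (f := fun z => Re (g z) + Re (h z))) => [z|]; [rewrite cReD | apply: cts_add].
by apply: (ctsat_ext (f := fun z => Im (g z) + Im (h z))) => [z|]; [rewrite cImD | apply: cts_add].
Qed.

Lemma ccts_opp g z0 : ccts g z0 -> ccts (fun z => - g z) z0.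
Proof.
move=> [g1 g2]; split.
  by apply: (ctsat_ext (f := fun z => - Re (g z))) => [z|]; [rewrite cReN | apply: cts_opp].
by apply: (ctsat_ext (f := fun z => - Im (g z))) => [z|]; [rewrite cImN | apply: cts_opp].
Qed.

Lemma ccts_mul g h z0 : ccts g z0 -> ccts h z0 -> ccts (fun z => g z * h z) z0.
Proof.
move=> [g1 g2] [h1 h2]; split.
  apply: (ctsat_ext (f := fun z => Re (g z) * Re (h z) + - (Im (g z) * Im (h z)))) => [z|].
    by rewrite cReM.
  by apply: cts_add; [apply: cts_mul | apply: cts_opp; apply: cts_mul].
apply: (ctsat_ext (f := fun z => Re (g z) * Im (h z) + Im (g z) * Re (h z))) => [z|].
  by rewrite cImM.
by apply: cts_add; apply: cts_mul.
Qed.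

Lemma cts_nz g z0 : ccts g z0 -> ctsat (fun z => nz (g z)) z0.
Proof.
move=> [g1 g2].
apply: (ctsat_ext (f := fun z => Re (g z) * Re (g z) + Im (g z) * Im (g z))) => [z|].
  by rewrite /nz !expr2.
by apply: cts_add; apply: cts_mul.
Qed.

Lemma ccts_p1 z0 : ccts (fun z : T3 => z.1.1) z0.
Proof.
split; apply: coord_lip => //; [exact: Re_le_cabs | exact: cReB | exact: d1 | exact: Im_le_cabs | exact: cImB | exact: d1].
Qed.
Lemma ccts_p2 z0 : ccts (fun z : T3 => z.1.2) z0.
Proof.
split; apply: coord_lip => //; [exact: Re_le_cabs | exact: cReB | exact: d2 | exact: Im_le_cabs | exact: cImB | exact: d2].
Qed.
Lemma ccts_p3 z0 : ccts (fun z : T3 => z.2) z0.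
Proof.
split; apply: coord_lip => //; [exact: Re_le_cabs | exact: cReB | exact: d3 | exact: Im_le_cabs | exact: cImB | exact: d3].
Qed.

Ltac solve_cts := repeat first
  [ apply: cts_const | apply: ccts_const | apply: ccts_p1 | apply: ccts_p2 | apply: ccts_p3
  | apply: cts_nz | apply: cts_add | apply: cts_opp
  | apply: ccts_add | apply: ccts_opp | apply: ccts_mul ].

Definition Xm (b : C) (z : T3) : 'M[C]_2 := \matrix_(i < 2, j < 2)
  if i == 0 then (if j == 0 then z.1.1 else b)
  else (if j == 0 then (z.1.1 * z.1.2 - z.2) * b^-1 else z.1.2).

Lemma interior_from (w : 'M[C]_2) :
  0 < Aq (w 0 0) (w 1 0) + Cq (w 0 1) (w 1 1) ->
  0 < Dq (w 0 0) (w 0 1) (w 1 0) (w 1 1) -> w 0 1 != 0 ->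
  interior3 (@tetrablock R) (piT w).
Proof.
move=> hT hD bn0.
set b := w 0 1.
set F1 := fun z : T3 => Aq z.1.1 ((z.1.1 * z.1.2 - z.2) * b^-1) + Cq b z.1.2.
set F2 := fun z : T3 => Dq z.1.1 b ((z.1.1 * z.1.2 - z.2) * b^-1) z.1.2.
have ec : (w 0 0 * w 1 1 - \det w) * b^-1 = w 1 0.
  by rewrite det22 -/b; field.
have c1 : ctsat F1 (piT w) by rewrite /F1 /Aq /Cq; solve_cts.
have c2 : ctsat F2 (piT w) by rewrite /F2 /Dq; solve_cts.
have q1 : 0 < F1 (piT w) by rewrite /F1 /= ec.
have q2 : 0 < F2 (piT w) by rewrite /F2 /= ec.
have [e1 e1p h1] := cts_pos c1 q1.
have [e2 e2p h2] := cts_pos c2 q2.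
exists (Num.min e1 e2); split; first by rewrite lt_min e1p e2p.
move=> z; rewrite lt_min => /andP [z1 z2].
have p1 := h1 z z1; have p2 := h2 z z2.
exists (Xm b z).
  rewrite /= ; apply: strict_opnorm; rewrite !mxE /=.
    exact: p1.
  exact: p2.
case: z {z1 z2 p1 p2} => [[x1 x2] x3].
rewrite /piT det22 !mxE /=; congr (_, _, _).
by field.
Qed.
End S6.

Section S7.
Variable R : realType.

Lemma key_t (t be ga : R) : 0 < t -> 0 < (1 - t) * (t * be - ga) ->
  t * be + ga * t^-1 < be + ga.
Proof.
move=> tp h.
have e : be + ga - (t * be + ga * t^-1) = (1 - t) * (t * be - ga) / t.
  by field; rewrite gt_eqF.
rewrite -subr_gt0 e divr_gt0 //.
Qed.

Lemma exist_s (be ga : R) : 0 <= be -> 0 <= ga -> be != ga ->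
  exists2 s : R, 0 < s & s ^+ 2 * be + ga * (s^-1) ^+ 2 < be + ga.
Proof.
move=> b0 g0 bg.
have [lt|lt|eq] := ltgtP be ga; last by rewrite eq eqxx in bg.
- set s := 2 * ga / (be + ga).
  have bgp : 0 < be + ga by lra.
  have hs : s * (be + ga) = 2 * ga by rewrite /s mulrVK // unitfE gt_eqF.
  have sp : 0 < s by rewrite /s divr_gt0 // ?mulr_gt0; lra.
  exists s => //; rewrite exprVn; apply: key_t; first exact: exprn_gt0.
  have s1 : 1 < s by nra.
  have h2 : s ^+ 2 * be - ga < 0.
    have : (s ^+ 2 * be - ga) * (be + ga) ^+ 2 = - ga * (be - ga) ^+ 2.
      have -> : (s ^+ 2 * be - ga) * (be + ga) ^+ 2 = (s * (be + ga)) ^+ 2 * be - ga * (be + ga) ^+ 2 by ring.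
      rewrite hs; ring.
    move=> h; have gp : 0 < ga by lra.
    have : 0 < (be - ga) ^+ 2 by rewrite exprn_even_gt0 //= subr_eq0 lt_eqF.
    have : 0 < (be + ga) ^+ 2 by rewrite exprn_gt0.
    nra.
  have : 1 < s ^+ 2 by nra.
  nra.
- set s := (be + ga) / (2 * be).
  have bp : 0 < be by lra.
  have hs : s * (2 * be) = be + ga by rewrite /s mulrVK // unitfE gt_eqF // mulr_gt0.
  have sp : 0 < s by rewrite /s divr_gt0 // ?mulr_gt0; lra.
  exists s => //; rewrite exprVn; apply: key_t; first exact: exprn_gt0.
  have s1 : s < 1 by nra.
  have h2 : 0 < s ^+ 2 * be - ga.
    have : (s ^+ 2 * be - ga) * (4 * be) = (be - ga) ^+ 2.
      have -> : (s ^+ 2 * be - ga) * (4 * be) = (s * (2 * be)) ^+ 2 - 4 * be * ga by ring.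
      rewrite hs; ring.
    move=> h.
    have : 0 < (be - ga) ^+ 2 by rewrite exprn_even_gt0 //= subr_eq0 gt_eqF.
    nra.
  have : s ^+ 2 < 1 by nra.
  nra.
Qed.
End S7.

Unset Implicit Arguments.
Theorem lemma9 (R : realType) (v : 'M[R[i]]_2) :
  opnorm v = 1 ->
  boundary3 (@tetrablock R) (piT v) ->
  cabs (v 0 1) = cabs (v 1 0).
Proof.
move=> hv [_ hni].
apply: contrapT => hne.
have [hT hD] := psd_cons (contraction hv).
set a := v 0 0 in hT hD; set b := v 0 1 in hT hD hne; set c := v 1 0 in hT hD hne.
set d := v 1 1 in hT hD.
have bg : nz b != nz c.
  apply/eqP => e; apply: hne; by rewrite /cabs -/(nz b) -/(nz c) e.
have [s sp hs] := exist_s (nz_ge0 b) (nz_ge0 c) bg.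
set w : 'M[R[i]]_2 := \matrix_(i < 2, j < 2)
  if i == 0 then (if j == 0 then a else b * s%:C%C)
  else (if j == 0 then c * (s^-1)%:C%C else d).
have w00 : w 0 0 = a by rewrite mxE.
have w01 : w 0 1 = b * s%:C%C by rewrite mxE.
have w10 : w 1 0 = c * (s^-1)%:C%C by rewrite mxE.
have w11 : w 1 1 = d by rewrite mxE.
have t00 : w^T 0 0 = a by rewrite [LHS]mxE.
have t01 : w^T 0 1 = c * (s^-1)%:C%C by rewrite [LHS]mxE.
have t10 : w^T 1 0 = b * s%:C%C by rewrite [LHS]mxE.
have t11 : w^T 1 1 = d by rewrite [LHS]mxE.
set del := nz b + nz c - (s ^+ 2 * nz b + nz c * s^-1 ^+ 2).
have delp : 0 < del by rewrite /del subr_gt0.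
have bc : b * s%:C%C * (c * (s^-1)%:C%C) = b * c.
  by rewrite mulrACA -rmorphM mulfV ?gt_eqF // mulr1.
have eT : Aq (w 0 0) (w 1 0) + Cq (w 0 1) (w 1 1) = Aq a c + Cq b d + del.
  rewrite w00 w01 w10 w11 /Aq /Cq !nzRM /del; ring.
have eD : Dq (w 0 0) (w 0 1) (w 1 0) (w 1 1) = Dq a b c d + del.
  rewrite w00 w01 w10 w11 /Dq !nzRM bc /del; ring.
have eTt : Aq (w^T 0 0) (w^T 1 0) + Cq (w^T 0 1) (w^T 1 1) = Aq a c + Cq b d + del.
  rewrite t00 t01 t10 t11 /Aq /Cq !nzRM /del; ring.
have eDt : Dq (w^T 0 0) (w^T 0 1) (w^T 1 0) (w^T 1 1) = Dq a b c d + del.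
  rewrite t00 t01 t10 t11 /Dq !nzRM [_ * (b * _)]mulrC bc /del; ring.
have epi : piT w = piT v.
  by rewrite /piT !det22 w00 w01 w10 w11 bc.
have epit : piT w^T = piT v.
  by rewrite -epi /piT det_tr t00 t11 w00 w11.
have [b0|bn0] := eqVneq b 0.
  have cn0 : c != 0.
    apply/eqP => c0; move: bg; by rewrite b0 c0 eqxx.
  apply: hni; rewrite -epit; apply: interior_from.
  - by rewrite eTt; lra.
  - by rewrite eDt; lra.
  - by rewrite t01 mulf_neq0 // (inj_eq (@complexI _)) invr_eq0 gt_eqF //.
apply: hni; rewrite -epi; apply: interior_from.
- by rewrite eT; lra.
- by rewrite eD; lra.
- by rewrite w01 mulf_neq0 // (inj_eq (@complexI _)) gt_eqF.
Qed.
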